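(* Let $F$ be a uniform set-system. The following are equivalent: (1) $F$ is an HKE set-system; (2) for every two non-empty disjoint subfamilies $\Gamma_1,\Gamma_2\subseteq F$, $$\Big|\bigcap\Gamma_1-\bigcup\Gamma_2\Big|=\Big|\bigcap\Gamma_2-\bigcup\Gamma_1\Big|;$$ (3) the equality in (2) holds for every two non-empty disjoint subfamilies $\Gamma_1,\Gamma_2\subseteq F$ with $\Gamma_1\cup\Gamma_2=F$.
   Context: A set-system is a family of sets; throughout, set-systems are non-empty finite families of finite non-empty sets. A set-system $F$ is uniform if all its members have the same cardinality, denoted $\alpha(F)$. A set-system $F$ is a hereditary König–Egerváry (HKE) set-system if there is a positive integer $\alpha$ such that $|\bigcup\Gamma|+|\bigcap\Gamma|=2\alpha$ for every non-empty subfamily $\Gamma\subseteq F$. Here $X-Y$ denotes set difference. *)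

(* Defs.v *)
From mathcomp Require Import all_boot.
Set Implicit Arguments. Unset Strict Implicit. Unset Printing Implicit Defensive.

Definition set_system (T : finType) (F : {set {set T}}) : Prop :=
  F != set0 /\ set0 \notin F.

Definition uniform (T : finType) (F : {set {set T}}) : Prop :=
  exists k, forall A, A \in F -> #|A| = k.

Definition bigU (T : finType) (G : {set {set T}}) : {set T} := \bigcup_(A in G) A.
Definition bigI (T : finType) (G : {set {set T}}) : {set T} := \bigcap_(A in G) A.

Definition HKE (T : finType) (F : {set {set T}}) : Prop :=
  exists alpha, 0 < alpha /\
    forall G : {set {set T}}, G \subset F -> G != set0 ->
      #|bigU G| + #|bigI G| = 2 * alpha.

Definition cond2 (T : finType) (F : {set {set T}}) : Prop :=
  forall G1 G2 : {set {set T}}, G1 \subset F -> G2 \subset F ->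
    G1 != set0 -> G2 != set0 -> [disjoint G1 & G2] ->
    #|bigI G1 :\: bigU G2| = #|bigI G2 :\: bigU G1|.

Definition cond3 (T : finType) (F : {set {set T}}) : Prop :=
  forall G1 G2 : {set {set T}}, G1 \subset F -> G2 \subset F ->
    G1 != set0 -> G2 != set0 -> [disjoint G1 & G2] -> G1 :|: G2 = F ->
    #|bigI G1 :\: bigU G2| = #|bigI G2 :\: bigU G1|.

(* Main.v *)
Require Import Defs.
From mathcomp Require Import all_boot zify.
Set Implicit Arguments.

Section Aux.
Variable T : finType.

Lemma bigU1 (A : {set T}) : Defs.bigU [set A] = A.
Proof. by rewrite /Defs.bigU big_set1. Qed.
Lemma bigI1 (A : {set T}) : Defs.bigI [set A] = A.
Proof. by rewrite /Defs.bigI big_set1. Qed.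
Lemma bigUU1 (A : {set T}) G : Defs.bigU (A |: G) = A :|: Defs.bigU G.
Proof. by rewrite /Defs.bigU bigcup_setU big_set1. Qed.
Lemma bigIU1 (A : {set T}) G : Defs.bigI (A |: G) = A :&: Defs.bigI G.
Proof. by rewrite /Defs.bigI bigcap_setU big_set1. Qed.

Definition cc (P Q : {set {set T}}) := #|Defs.bigI P :\: Defs.bigU Q|.

Lemma L1 (A : {set T}) P Q : cc P Q = cc P (A |: Q) + cc (A |: P) Q.
Proof.
rewrite /cc bigUU1 bigIU1 -(cardsID A (Defs.bigI P :\: Defs.bigU Q)) addnC.
by congr (_ + _); apply: eq_card => x; rewrite !inE; case: (x \in Defs.bigI P);
  case: (x \in A); case: (x \in Defs.bigU Q).
Qed.

Lemma L2 (A U I : {set T}) :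
  #|A :|: U| + #|A :&: I| + #|I :\: A| = #|U| + #|A :\: U| + #|I|.
Proof.
have -> : #|A :|: U| = #|U| + #|A :\: U|.
  rewrite -(cardsID U (A :|: U)); congr (_ + _); apply: eq_card => x;
  by rewrite !inE; case: (x \in A); case: (x \in U).
rewrite -addnA (setIC A I) cardsID //.
Qed.
Lemma djI (X Y : {set {set T}}) :
  (forall x, x \in X -> x \in Y -> False) -> [disjoint X & Y].
Proof. move=> h; rewrite disjoint_subset; apply/subsetP => x xX; rewrite inE;
  apply/negP => xY; exact: h x xX xY. Qed.
Lemma djE (X Y : {set {set T}}) x : [disjoint X & Y] -> x \in X -> x \in Y -> False.
Proof. by move=> d xX; rewrite (disjointFr d xX). Qed.
End Aux.

Theorem proposition2p2 (T : finType) (F : {set {set T}})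
  (hF : set_system F) (hU : uniform F) :
  (HKE F <-> cond2 F) /\ (cond2 F <-> cond3 F).
Proof.
case: hF => hF0 hF1; case: hU => k hk.
have c2c3 : cond2 F -> cond3 F by move=> h G1 G2 *; apply: h.
have c3c2 : cond3 F -> cond2 F.
  move=> h3.
  suff H : forall n (P Q : {set {set T}}), P \subset F -> Q \subset F -> P != set0 -> Q != set0 ->
     [disjoint P & Q] -> #|F| - #|P :|: Q| <= n -> cc P Q = cc Q P.
    by move=> P Q *; apply: (H #|F|) => //; apply: leq_subr.
  elim=> [|n IH] P Q sP sQ nP nQ dPQ hn.
    apply: h3 => //; apply/eqP; rewrite eqEcard.
    by rewrite subUset sP sQ /= -subn_eq0 -leqn0.
  case: (boolP (P :|: Q == F)) => [/eqP e|ne]; first by apply: h3.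
  have : ~~ (F \subset P :|: Q).
    apply: contra ne => s; by rewrite eqEsubset subUset sP sQ s.
  case/subsetPn => A AF AnPQ.
  move: AnPQ; rewrite inE negb_or => /andP[AnP AnQ].
  have sPQ : #|P :|: Q| < #|F|.
    rewrite ltnNge; apply: contra ne => le; rewrite eqEcard le subUset sP sQ //.
  have cU : forall X Y, X :|: Y = P :|: Q -> #|F| - #|A |: X :|: Y| <= n.
    move=> X Y e; rewrite -setUA e cardsU1 inE negb_or AnP AnQ /= add1n; move: hn sPQ; set a := #|F|; set b := #|P :|: Q|; lia.
  have dj : forall X Y : {set {set T}}, [disjoint X & Y] -> A \notin Y ->
     [disjoint A |: X & Y].
    move=> X Y d nY; apply: djI => x; rewrite in_setU1 => /orP[/eqP -> | xX] xY.
      by rewrite xY in nY.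
    exact: djE d xX xY.
  have sA : forall X : {set {set T}}, X \subset F -> A |: X \subset F.
    by move=> X s; rewrite subUset sub1set AF s.
  have nA : forall X : {set {set T}}, A |: X != set0.
    by move=> X; apply/set0Pn; exists A; rewrite setU11.
  have e1 := L1 A P Q; have e2 := L1 A Q P.
  have i1 : cc P (A |: Q) = cc (A |: Q) P.
    apply: IH => //; [exact: sA | by rewrite disjoint_sym dj // disjoint_sym
      | by rewrite setUCA setUA; apply: cU].
  have i2 : cc (A |: P) Q = cc Q (A |: P).
    by apply: IH => //; [exact: sA | exact: dj | exact: cU].
  by rewrite e1 e2 i1 i2 addnC.
split; last by split.
split.
- case=> alpha [a0 hH] P Q sP sQ nP nQ dPQ.
  suff H : forall n m (P Q : {set {set T}}), P \subset F -> Q \subset F -> P != set0 -> Q != set0 ->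
     [disjoint P & Q] -> #|P :|: Q| <= n -> #|P| <= m -> cc P Q = cc Q P.
    by apply: (H _ _ P Q sP sQ nP nQ dPQ (leqnn _) (leqnn _)).
  have sing : forall A (Q : {set {set T}}), A \in F -> Q \subset F -> Q != set0 -> A \notin Q ->
      cc [set A] Q = cc Q [set A].
    move=> A Q' AF sQ' nQ' AQ'; rewrite /cc bigU1 bigI1.
    have h1 := hH Q' sQ' nQ'.
    have h2 : #|Defs.bigU (A |: Q')| + #|Defs.bigI (A |: Q')| = 2 * alpha.
      apply: hH; last by apply/set0Pn; exists A; rewrite setU11.
      by rewrite subUset sub1set AF sQ'.
    rewrite bigUU1 bigIU1 in h2.
    have := L2 A (Defs.bigU Q') (Defs.bigI Q'); clear -h1 h2; lia.
  elim=> [|n IHn] m P' Q' sP' sQ' nP' nQ' d'.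
    by rewrite leqn0 cards_eq0 setU_eq0 (negbTE nP').
  move=> hn; elim: m P' Q' sP' sQ' nP' nQ' d' hn => [|m IHm] P' Q' sP' sQ' nP' nQ' d' hn hm.
    by move: hm; rewrite leqn0 cards_eq0 (negbTE nP').
  case: (boolP (#|P'| == 1)) => [/cards1P[A eA]|n1].
    subst P'; apply: sing => //; first by apply: (subsetP sP'); rewrite set11.
    by apply/negP => AQ; apply: (djE d' (set11 A) AQ).
  case/set0Pn: nP' => A AP.
  have AF : A \in F by apply: (subsetP sP').
  have AQ : A \notin Q' by apply/negP => AQ; apply: (djE d' AP AQ).
  set P0 := P' :\ A.
  have eP : A |: P0 = P' by rewrite setD1K.
  have cP := cardsD1 A P'; rewrite AP in cP.
  have nP0 : P0 != set0 by rewrite -cards_eq0; apply/negP => /eqP c0; 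
    rewrite c0 in cP; rewrite cP in n1.
  have A0 : A \notin P0 by rewrite !inE eqxx.
  have sP0 : P0 \subset F by apply: subset_trans sP'; apply: subsetDl.
  have d0 : [disjoint P0 & Q'].
    apply: djI => x; rewrite inE => /andP[_ xP] xQ; exact: djE d' xP xQ.
  have eU : P' :|: Q' = A |: (P0 :|: Q') by rewrite setUA eP.
  have cU : #|P' :|: Q'| = (#|P0 :|: Q'|).+1.
    by rewrite eU cardsU1 inE negb_or A0 AQ.
  have e1 := L1 A P0 Q'; have e2 := L1 A Q' P0; rewrite eP in e1 e2.
  have cP' : #|P'| = #|P0|.+1 by rewrite cP.
  have i1 : cc P0 Q' = cc Q' P0 by apply: (IHn #|P0|) => //; rewrite -ltnS -cU.
  have i2 : cc P0 (A |: Q') = cc (A |: Q') P0.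
    apply: IHm => //; first by rewrite subUset sub1set AF sQ'.
    - by apply/set0Pn; exists A; rewrite setU11.
    - apply: djI => x xP; rewrite in_setU1 => /orP[/eqP e|xQ];
        [by move: A0; rewrite -e xP | exact: djE d0 xP xQ].
    - by rewrite setUCA -eU.
    - by rewrite -ltnS -cP'.
  move: e2; rewrite -i1 e1 i2 addnC => /addIn. done.
- move=> h2; exists k; split.
    case/set0Pn: hF0 => A AF; rewrite -(hk A AF) lt0n cards_eq0; apply/eqP => e.
    by rewrite -e AF in hF1.
  suff H : forall n (G : {set {set T}}), G \subset F -> G != set0 -> #|G| <= n ->
      #|Defs.bigU G| + #|Defs.bigI G| = 2 * k.
    by move=> G sG nG; apply: (H #|G|).
  elim=> [|n IH] G sG nG hn; first by move: hn; rewrite leqn0 cards_eq0 (negbTE nG).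
  case/set0Pn: (nG) => A AG.
  have AF : A \in F by apply: (subsetP sG).
  case: (boolP (G :\ A == set0)) => [e|ne].
    have -> : G = [set A].
      apply/eqP; rewrite eqEsubset sub1set AG andbT; apply/subsetP => x xG.
      rewrite inE; apply: contraT => nx; move/eqP: e => /setP/(_ x).
      by rewrite !inE nx xG.
    by rewrite bigU1 bigI1 (hk A AF) addnn mul2n.
  have eG : A |: (G :\ A) = G by rewrite setD1K.
  have cG := cardsD1 A G; rewrite AG in cG.
  have sG0 : G :\ A \subset F by apply: subset_trans sG; apply: subsetDl.
  have cG' : #|G| = #|G :\ A|.+1 by rewrite cG.
  have i := IH _ sG0 ne ltac:(by rewrite -ltnS -cG').
  have hc : cc [set A] (G :\ A) = cc (G :\ A) [set A].
    apply: h2 => //; first by rewrite sub1set.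
    - by apply/set0Pn; exists A; rewrite set11.
    - apply: djI => x; rewrite !inE => /eqP -> ; by rewrite eqxx.
  move: hc; rewrite /cc bigU1 bigI1 => hc.
  have eU : Defs.bigU G = A :|: Defs.bigU (G :\ A) by rewrite -{1}eG bigUU1.
  have eI : Defs.bigI G = A :&: Defs.bigI (G :\ A) by rewrite -{1}eG bigIU1.
  rewrite eU eI; have hA := hk A AF.
  have l2 := L2 A (Defs.bigU (G :\ A)) (Defs.bigI (G :\ A)); clear -hA hc i l2; lia.
Qed.
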